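(* Let $n\ge 1$ and let $\mathbb{F}_q$ be a finite field. The adjacency matrix of the unit-graph on $\operatorname{Mat}_n(\mathbb{F}_q)$ has at most $n+1$ distinct eigenvalues.
   Context: The unit-graph on $\operatorname{Mat}_n(\mathbb{F}_q)$ is the Cayley digraph $\operatorname{Cay}(\operatorname{Mat}_n(\mathbb{F}_q), \operatorname{GL}_n(\mathbb{F}_q))$: its vertex set is $\operatorname{Mat}_n(\mathbb{F}_q)$ and there is a directed edge from $A$ to $B$ iff $B - A$ is invertible; it is regarded as an undirected graph since $\operatorname{GL}_n(\mathbb{F}_q)$ is closed under negation. *)

(* Defs.v *)
From HB Require Import structures.
From mathcomp Require Import all_boot all_order all_algebra all_field.
Set Implicit Arguments. Unset Strict Implicit. Unset Printing Implicit Defensive.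
Import GRing.Theory Num.Theory.
Local Open Scope ring_scope.

Definition unit_graph_adj (F : finFieldType) (n : nat)
  : 'M[algC]_(#|{: 'M[F]_n}|) :=
  \matrix_(i, j) (if (enum_val j - enum_val i : 'M[F]_n) \in unitmx
                  then 1 else 0).

(* Main.v *)
Require Import Defs.
From HB Require Import structures.
From mathcomp Require Import all_boot all_order all_algebra all_field.
Local Open Scope ring_scope.
From Stdlib Require Import Classical.
Set Implicit Arguments. Unset Strict Implicit. Unset Printing Implicit Defensive.
Import GRing.Theory Num.Theory.

Section S.
Variables (F : finFieldType) (n : nat).
Local Notation N := #|{: 'M[F]_n}|.
Local Notation ev := (@enum_val _ (pred_of_simpl (@predT 'M[F]_n))).

Definition Sh (h : nat -> algC) (D : 'M[F]_n) : algC :=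
  \sum_(Z : 'M[F]_n) h (\rank Z) * ((D - Z) \in unitmx)%:R.

Lemma Sh_inv h (P Q D : 'M[F]_n) : P \in unitmx -> Q \in unitmx ->
  Sh h (P *m D *m Q) = Sh h D.
Proof.
move=> uP uQ; rewrite /Sh (reindex_inj (h := fun Z => P *m Z *m Q)).
  apply: eq_bigr => Z _.
  rewrite -mulmxBl -mulmxBr !unitmx_mul uP uQ andbT.
  rewrite mxrankMfree ?row_free_unit //.
  by rewrite (eqmxMfull _ _) // row_full_unit.
move=> Z1 Z2 /= e.
by rewrite -(mulKmx uP Z1) -(mulKmx uP Z2) -(mulmxK uQ (P *m Z1)) e mulmxK.
Qed.

Lemma Sh_rank h D : Sh h D = Sh h (pid_mx (\rank D)).
Proof.
by rewrite -{1}(mulmx_ebase D) Sh_inv ?col_ebase_unit ?row_ebase_unit.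
Qed.

Definition Mh (h : nat -> algC) : 'M[algC]_N :=
  \matrix_(i, j) h (\rank (ev j - ev i)).

Lemma Mh_step h : Mh h *m unit_graph_adj F n = Mh (fun r => Sh h (pid_mx r)).
Proof.
apply/matrixP => i j; rewrite !mxE -Sh_rank /Sh.
have -> : \sum_j0 Mh h i j0 * unit_graph_adj F n j0 j =
  \sum_(z < N) (fun x : 'M[F]_n => h (\rank (x - ev i)) * ((ev j - x) \in unitmx)%:R) (ev z).
  apply: eq_bigr => z _; rewrite !mxE; by case: (_ \in unitmx).
rewrite -(big_enum_val (fun x : 'M[F]_n => h (\rank (x - ev i)) * ((ev j - x) \in unitmx)%:R)) /=. rewrite (reindex_inj (addrI (ev i))) /=.
apply: eq_bigr => Z _.
by rewrite addrC addKr opprD addrA.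
Qed.

Definition Ak (l : nat) := Mh (fun r => (r == l)%:R).

Lemma Mh_span h : Mh h = \sum_(l < n.+1) h l *: Ak l.
Proof.
apply/matrixP => i j; rewrite summxE !mxE.
have lt : (\rank (ev j - ev i)%R < n.+1)%N by rewrite ltnS rank_leq_row.
rewrite (bigD1 (Ordinal lt)) //= big1 ?addr0.
  by rewrite !mxE eqxx mulr1.
move=> l ne; rewrite !mxE.
case: eqP => [e|]; last by rewrite mulr0.
by case/eqP: ne; apply: val_inj; rewrite /= e.
Qed.

Definition pw k := iter k (fun M => M *m unit_graph_adj F n) 1%:M.

Lemma pw_Mh k : exists h, pw k = Mh h.
Proof.
elim: k => [|k [h IH]].
  exists (fun r => (r == 0%N)%:R); apply/matrixP => i j; rewrite !mxE.
  rewrite mxrank_eq0 subr_eq0 (inj_eq enum_val_inj) eq_sym.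
  by case: eqP.
by exists (fun r => Sh h (pid_mx r)); rewrite /pw iterS -/(pw k) IH Mh_step.
Qed.

Lemma pwS k : pw k.+1 = pw k *m unit_graph_adj F n.
Proof. by []. Qed.
End S.

Theorem proposition3p2 (F : finFieldType) (n : nat) (hn : (0 < n)%N)
  (s : seq algC) :
  uniq s -> all (eigenvalue (unit_graph_adj F n)) s -> (size s <= n.+1)%N.
Proof.
move=> us als.
pose X := [tuple Ak F n l | l < n.+1]. pose V := <<X>>%VS.
pose P := [tuple pw F n k | k < n.+2].
have PV : (<<P>> <= V)%VS.
  apply/span_subvP => M /tnthP [k ->]; rewrite tnth_mktuple.
  case: (pw_Mh F n k) => h ->; rewrite Mh_span.
  apply: memv_suml => l _; apply: memvZ; apply: memv_span.
  by apply/tnthP; exists l; rewrite tnth_mktuple.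
have nfree : ~~ free P.
  rewrite /free size_tuple; apply/negP => /eqP e.
  have := dimvS PV; rewrite e; have := dim_span X; rewrite size_tuple.
  by move=> h1 h2; have := leq_trans h2 h1; rewrite ltnn.
have [k [hk [i0 ki0]]] : exists k : 'I_n.+2 -> algC,
    \sum_i k i *: P`_i = 0 /\ exists i, k i != 0.
  apply: NNPP => H; move/negP: nfree; apply; apply/freeP => k0 hk0 i.
  apply: NNPP => ne; apply: H; exists k0; split => //; exists i; exact/eqP.
have hk' : \sum_i k i *: pw F n i = 0.
  rewrite -[RHS]hk; apply: eq_bigr => i _; by rewrite -tnth_nth tnth_mktuple.
pose p := \poly_(i < n.+2) k (inord i).
have p0 : p != 0.
  apply/eqP => /(congr1 (fun q : {poly algC} => q`_i0)).
  rewrite coef_poly ltn_ord inord_val coef0; exact/eqP.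
apply: (leq_trans (max_poly_roots p0 _ us) (size_poly _ _)).
apply/allP => a /(allP als) /eigenvalueP [v vA nz].
have vp : forall m, v *m pw F n m = a ^+ m *: v.
  elim => [|m IH]; first by rewrite mulmx1 expr0 scale1r.
  by rewrite pwS mulmxA IH -scalemxAl vA scalerA exprSr.
have : v *m (\sum_i k i *: pw F n i) = 0 by rewrite hk' mulmx0.
rewrite mulmx_sumr.
under eq_bigr do rewrite -scalemxAr vp scalerA.
rewrite -scaler_suml => /eqP; rewrite scaler_eq0 (negbTE nz) orbF => /eqP S.
rewrite /root horner_poly; apply/eqP; rewrite -[RHS]S; apply: eq_bigr => i _.
by rewrite inord_val.
Qed.
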